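(* Let $A \in \mathbb{R}^{m \times r}$, let $C = \{ x \in \mathbb{R}^r \mid Ax \ge 0\}$, and let $\tilde C = \{ (x, Ax) \in \mathbb{R}^{r+m} \mid Ax \ge 0\}$. Then for every nonzero $x \in C$: $x$ is conformally non-decomposable in $C$ if and only if $(x, Ax)$ is conformally non-decomposable in $\tilde C$.
   Context: For $x \in \mathbb{R}^n$, $\operatorname{sign}(x) \in \{-,0,+\}^n$ is obtained by applying the sign function componentwise; the relations $0<-$, $0<+$ induce a componentwise partial order on $\{-,0,+\}^n$ ($-$ and $+$ incomparable). For a convex cone $K$, a nonzero $x \in K$ is conformally non-decomposable in $K$ if for all nonzero $x^1,x^2 \in K$ with $\operatorname{sign}(x^1),\operatorname{sign}(x^2) \le \operatorname{sign}(x)$, $x = x^1 + x^2$ implies $x^1 = \lambda x^2$ for some $\lambda > 0$. *)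

(* Defs.v *)
From HB Require Import structures.
From mathcomp Require Import all_boot all_order all_algebra.
Set Implicit Arguments. Unset Strict Implicit. Unset Printing Implicit Defensive.
Import Order.TTheory GRing.Theory Num.Theory.
Local Open Scope ring_scope.

(* componentwise sign order: sign(y) <= sign(x) with 0 < -, 0 < +,
   - and + incomparable; i.e. each sign(y_i) is 0 or equal to sign(x_i). *)
Definition sign_le (R : realDomainType) (n : nat) (y x : 'cV[R]_n) : Prop :=
  forall i : 'I_n, Num.sg (y i 0) = 0 \/ Num.sg (y i 0) = Num.sg (x i 0).

Definition conf_nondec (R : realDomainType) (n : nat)
    (K : 'cV[R]_n -> Prop) (x : 'cV[R]_n) : Prop :=
  x != 0 /\ K x /\
  forall x1 x2 : 'cV[R]_n,
    x1 != 0 -> x2 != 0 -> K x1 -> K x2 ->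
    sign_le x1 x -> sign_le x2 x -> x = x1 + x2 ->
    exists2 lambda : R, 0 < lambda & x1 = lambda *: x2.

Definition coneC (R : realDomainType) (m r : nat) (A : 'M[R]_(m, r))
    (x : 'cV[R]_r) : Prop :=
  forall i : 'I_m, 0 <= (A *m x) i 0.

Definition coneCt (R : realDomainType) (m r : nat) (A : 'M[R]_(m, r))
    (z : 'cV[R]_(r + m)) : Prop :=
  exists2 x : 'cV[R]_r, coneC A x & z = col_mx x (A *m x).

(* Main.v *)
Require Import Defs.
From HB Require Import structures.
From mathcomp Require Import all_boot all_order all_algebra.
Import Order.TTheory GRing.Theory Num.Theory.
Local Open Scope ring_scope.

Lemma sign_le_top (R : realFieldType) (m r : nat) (y x : 'cV[R]_r) (u v : 'cV[R]_m) :
  sign_le (col_mx y u) (col_mx x v) -> sign_le y x.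
Proof. by move=> H i; have := H (lshift m i); rewrite !col_mxEu. Qed.

Lemma sign_le_col (R : realFieldType) (m r : nat) (y x : 'cV[R]_r) (u v : 'cV[R]_m) :
  sign_le y x -> sign_le u v -> sign_le (col_mx y u) (col_mx x v).
Proof.
move=> H1 H2 j; rewrite -(splitK j); case: (split j) => k /=.
  by rewrite !col_mxEu.
by rewrite !col_mxEd.
Qed.

Lemma col_neq0 (R : realFieldType) (m r : nat) (y : 'cV[R]_r) (u : 'cV[R]_m) :
  y != 0 -> col_mx y u != 0.
Proof.
move=> Hy; apply/eqP=> H; move: Hy; rewrite -[y](col_mxKu y u) H.
by rewrite -col_mx0 col_mxKu eqxx.
Qed.

Theorem lemma2 (R : realFieldType) (m r : nat) (A : 'M[R]_(m, r)) (x : 'cV[R]_r) :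
  coneC A x -> x != 0 ->
  (conf_nondec (coneC A) x <-> conf_nondec (coneCt A) (col_mx x (A *m x))).
Proof.
move=> Cx x0; split.
- case=> _ [_ H]; split; first exact: (@col_neq0 _ _ _ x (A *m x)).
  split; first by exists x.
  move=> z1 z2 n1 n2 [y1 C1 Ez1] [y2 C2 Ez2]; subst z1 z2 => s1 s2 E.
  have E' : x = y1 + y2.
    by move: E; rewrite add_col_mx => /eq_col_mx [].
  have ny1 : y1 != 0.
    apply: contraNneq n1 => ->; by rewrite mulmx0 col_mx0.
  have ny2 : y2 != 0.
    apply: contraNneq n2 => ->; by rewrite mulmx0 col_mx0.
  have [l l0 El] := H y1 y2 ny1 ny2 C1 C2 (sign_le_top _ _ _ _ _ _ _ s1) (sign_le_top _ _ _ _ _ _ _ s2) E'.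
  by exists l => //; rewrite El scale_col_mx scalemxAr.
- case=> _ [_ H]; split => //; split => //.
  move=> y1 y2 n1 n2 C1 C2 s1 s2 E.
  have sA : forall (a b : 'cV[R]_r), coneC A a -> coneC A b ->
      sign_le (A *m a) (A *m (a + b)).
    move=> a b Ca Cb i; rewrite mulmxDr; have ha := Ca i; have hb := Cb i.
    move: ha hb; set u := A *m a; set v := A *m b; move=> ha hb.
    have -> : (u + v) i 0 = u i 0 + v i 0 by rewrite !mxE.

    case: (ltrgtP (u i 0) 0) => h.
    + by move: ha; rewrite leNgt h.
    + right; have hab := ltr_wpDr hb h. by rewrite (gtr0_sg h) (gtr0_sg hab).
    + by left; rewrite h sgr0.
  have C1' : coneCt A (col_mx y1 (A *m y1)) by exists y1.
  have C2' : coneCt A (col_mx y2 (A *m y2)) by exists y2.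
  have s1' : sign_le (col_mx y1 (A *m y1)) (col_mx x (A *m x)).
    by apply: sign_le_col => //; rewrite E; apply: sA.
  have s2' : sign_le (col_mx y2 (A *m y2)) (col_mx x (A *m x)).
    by apply: sign_le_col => //; rewrite E addrC; apply: sA.
  have E' : col_mx x (A *m x) = col_mx y1 (A *m y1) + col_mx y2 (A *m y2).
    by rewrite add_col_mx -mulmxDr -E.
  have [l l0 El] := H _ _ (@col_neq0 _ _ _ _ (A *m y1) n1) (@col_neq0 _ _ _ _ (A *m y2) n2) C1' C2' s1' s2' E'.
  exists l => //; move: El; rewrite scale_col_mx => /eq_col_mx [] //.
Qed.
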